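(* Let $n \ge 1$ and let $a_1, \dots, a_n$ be positive real numbers with $\sum_{i=1}^n a_i = 1$. Consider vectors $u_{(i,t)}$ indexed by $(i,t) \in [n] \times [3]$ subject to the following constraints: (1) $u_{(i,t)} \cdot u_{(i,t)} = 1$ for all $(i,t)$; (2) $u_{(i,1)} \cdot u_{(i,2)} = 0$ for all $i \in [n]$; (3) $u_{(i,3)} \cdot u_{(i,1)} = u_{(i,3)} \cdot u_{(i,2)} = \frac{1}{\sqrt{2}}$ for all $i \in [n]$; (4) $u_{(i,1)} \cdot u_{(i+1,1)} = u_{(i,2)} \cdot u_{(i+1,2)} = u_{(i,3)} \cdot u_{(i+1,3)} = \cos a_i$ for all $i \in [n]$, where the index $i+1$ is taken modulo $n$ (so $n+1$ means $1$). Then there exists a set $I \subseteq [n]$ with $\sum_{i \in I} a_i = \sum_{i \notin I} a_i$ if and only if there exists a family of vectors in $\mathbb{R}^2$ satisfying these constraints. *)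

(* Defs.v *)
From HB Require Import structures.
From mathcomp Require Import all_boot all_order all_algebra.
From mathcomp Require Import all_classical all_reals all_analysis.
Set Implicit Arguments. Unset Strict Implicit. Unset Printing Implicit Defensive.
Import Order.TTheory GRing.Theory Num.Theory.
Local Open Scope ring_scope.

Definition dot2 {R : realType} (u v : 'rV[R]_2) : R := \sum_(k < 2) u 0 k * v 0 k.

(* Constraints (1)-(4) for a family u indexed by [n] x [3]
   (the index t = 1,2,3 of the paper is 'I_3 element 0,1,2 here;
   the index i+1 mod n is the cyclic successor ordS i). *)
Definition feasible2 {R : realType} (n : nat) (a : 'I_n -> R)
    (u : 'I_n -> 'I_3 -> 'rV[R]_2) : Prop :=
  [/\ (forall i t, dot2 (u i t) (u i t) = 1),
      (forall i, dot2 (u i 0) (u i 1) = 0),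
      (forall i, dot2 (u i 2) (u i 0) = (Num.sqrt 2)^-1 /\
                 dot2 (u i 2) (u i 1) = (Num.sqrt 2)^-1) &
      (forall i t, dot2 (u i t) (u (ordS i) t) = cos (a i))].

(* Main.v *)
Require Import Defs.
From HB Require Import structures.
From mathcomp Require Import all_boot all_order all_algebra.
From mathcomp Require Import all_classical all_reals all_analysis.
From mathcomp Require Import ring lra.
Import Order.TTheory GRing.Theory Num.Theory.
Local Open Scope ring_scope.


Section S.
Variable R : realType.

Lemma dot2E (u v : 'rV[R]_2) :
  dot2 u v = u 0 0 * v 0 0 + u 0 1 * v 0 1.
Proof.
rewrite /dot2 big_ord_recr big_ord_recr big_ord0 /=.
have -> : (widen_ord (leqnSn 1) ord_max) = 0 :> 'I_2 by apply/val_inj.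
have -> : (@ord_max 1) = 1 :> 'I_2 by apply/val_inj.
by rewrite add0r.
Qed.

Definition mkv (p q : R) : 'rV[R]_2 := \row_(k < 2) (if val k == 0%N then p else q).

Lemma dot_mkv p q p' q' : dot2 (mkv p q) (mkv p' q') = p * p' + q * q'.
Proof. by rewrite dot2E !mxE. Qed.

Lemma eqf_try (x y : R) : x ^+ 2 = y ^+ 2 -> x = y \/ x = - y.
Proof. by move/eqP; rewrite eqf_sqr => /orP[/eqP|/eqP]; [left|right]. Qed.


Lemma step (x y x' y' a : R) : x ^+ 2 + y ^+ 2 = 1 -> x' ^+ 2 + y' ^+ 2 = 1 ->
  x * x' + y * y' = cos a -> 0 < a < 2 ->
  let b := if 0 <= x * y' - y * x' then a else - a in
  x' = cos b * x - sin b * y /\ y' = cos b * y + sin b * x.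
Proof.
move=> h1 h2 hc ha b.
set s := x * y' - y * x'.
have hs2 : s ^+ 2 = sin a ^+ 2.
  have : (x * x' + y * y') ^+ 2 + s ^+ 2 = (x ^+ 2 + y ^+ 2) * (x' ^+ 2 + y' ^+ 2).
    rewrite /s; ring.
  rewrite h1 h2 mulr1 hc => h.
  have := cos2Dsin2 a. lra.
have sp : 0 < sin a by apply: sin2_gt0.
have hcb : cos b = cos a by rewrite /b; case: ifP => _; rewrite ?cosN.
have hsb : sin b = s.
  rewrite /b -/s; case: (eqf_try _ _ hs2) => e; case: ifP => hs; rewrite ?sinN.
  - by rewrite e.
  - move/negbT: hs; rewrite -ltNge => h; exfalso; lra.
  - exfalso; lra.
  - rewrite e; lra.
rewrite hcb hsb -hc /s; split.
- transitivity (x' * (x ^+ 2 + y ^+ 2)); first by rewrite h1 mulr1.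
  ring.
- transitivity (y' * (x ^+ 2 + y ^+ 2)); first by rewrite h1 mulr1.
  ring.
Qed.

Lemma cos_eq1 (x : R) : `|x| < 4 -> cos x = 1 -> x = 0.
Proof.
move=> hx hc; apply/eqP; apply/negPn/negP => hx0.
have hca : cos `|x| = 1.
  have [x0|x0] := leP 0 x; first by rewrite ger0_norm.
  by rewrite ltr0_norm // cosN.
set y := `|x| / 2.
have hy : `|x| = y + y by rewrite /y; field.
have ny : 0 < `|x| by rewrite normr_gt0.
have sp : 0 < sin y by apply: sin2_gt0; rewrite /y; apply/andP; split; lra.
move: hca; rewrite hy cosD => h.
have := cos2Dsin2 y. nra.
Qed.


Lemma rot (m : nat) (X Y A : nat -> R) :
  (forall k, X k ^+ 2 + Y k ^+ 2 = 1) ->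
  (forall k, (k <= m)%N -> X k * X k.+1 + Y k * Y k.+1 = cos (A k)) ->
  (forall k, (k <= m)%N -> 0 < A k < 2) ->
  forall k, (k <= m.+1)%N ->
  let th := \sum_(0 <= j < k) (if 0 <= X j * Y j.+1 - Y j * X j.+1 then A j else - A j) in
  X k = cos th * X 0 - sin th * Y 0 /\ Y k = cos th * Y 0 + sin th * X 0.
Proof.
move=> h1 h2 h3; elim=> [|k IH] hk th.
  rewrite /th big_geq // cos0 sin0; split; ring.
have [IHx IHy] := IH (ltnW hk).
have [sx sy] := step _ _ _ _ _ (h1 k) (h1 k.+1) (h2 k hk) (h3 k hk).
rewrite /th big_nat_recr //=.
set b := (if 0 <= X k * Y k.+1 - Y k * X k.+1 then A k else - A k) in sx sy *.
set t0 := \sum_(0 <= j < k) _ in IHx IHy *.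
rewrite sx sy IHx IHy cosD sinD; split; ring.
Qed.

Lemma le_sum n (a : 'I_n -> R) (hpos : forall i, 0 < a i) i : a i <= \sum_(j < n) a j.
Proof.
rewrite (bigD1 i) //= lerDl; apply: sumr_ge0 => j _; exact: ltW.
Qed.


Definition U (phi : R) (t : 'I_3) : 'rV[R]_2 :=
  let r := (Num.sqrt 2)^-1 in
  match val t with
  | 0 => mkv (cos phi) (sin phi)
  | 1 => mkv (- sin phi) (cos phi)
  | _ => mkv (r * (cos phi - sin phi)) (r * (sin phi + cos phi))
  end.

Lemma hr : (Num.sqrt 2)^-1 * (Num.sqrt 2)^-1 * 2 = 1 :> R.
Proof. by rewrite -expr2 exprVn sqr_sqrtr ?mulVf. Qed.

Lemma U_dot p q t : dot2 (U p t) (U q t) = cos (p - q).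
Proof.
case: t => [[|[|t]] Ht]; rewrite /U /= dot_mkv cosB; try ring.
set r := (Num.sqrt 2)^-1.
transitivity (r * r * 2 * (cos p * cos q + sin p * sin q)); first ring.
by rewrite hr mul1r.
Qed.

Lemma U01 p : dot2 (U p 0) (U p 1) = 0.
Proof. rewrite /U /= dot_mkv; ring. Qed.

Lemma U2 p : dot2 (U p 2) (U p 0) = (Num.sqrt 2)^-1 /\
                 dot2 (U p 2) (U p 1) = (Num.sqrt 2)^-1.
Proof.
rewrite /U /= !dot_mkv; set r := (Num.sqrt 2)^-1.
have := cos2Dsin2 p => h.
split.
- transitivity (r * (cos p ^+ 2 + sin p ^+ 2)); first ring.
  by rewrite h mulr1.
- transitivity (r * (cos p ^+ 2 + sin p ^+ 2)); first ring.
  by rewrite h mulr1.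
Qed.

End S.
Arguments U {R}.
Arguments rot {R m X Y A}.
Arguments le_sum {R n a}.
Arguments cos_eq1 {R x}.

Theorem lemma3p2 (R : realType) (n : nat) (hn : (1 <= n)%N) (a : 'I_n -> R)
    (hpos : forall i, 0 < a i) (hsum : \sum_(i < n) a i = 1) :
  (exists I : {set 'I_n}, \sum_(i in I) a i = \sum_(i in ~: I) a i) <->
  (exists u : 'I_n -> 'I_3 -> 'rV[R]_2, feasible2 a u).
Proof.
case: n hn a hpos hsum => [//|m] _ a hpos hsum.
split.
- case=> I hI.
  pose A := fun j : nat => a (inord j).
  pose B := fun j : nat => if (inord j : 'I_m.+1) \in I then A j else - A j.
  pose phi := fun k : nat => \sum_(0 <= j < k) B j.
  have htot : phi m.+1 = 0.
    rewrite /phi big_mkord (bigID (fun i => i \in I)) /=.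
    rewrite (eq_bigr (fun i => a i)) => [|i hi]; last by rewrite /B inord_val hi /A inord_val.
    rewrite [X in _ + X](eq_bigr (fun i => - a i)) => [|i hi]; last by rewrite /B inord_val (negbTE hi) /A inord_val.
    rewrite hI sumrN.
    have -> : \sum_(i < m.+1 | i \notin I) a i = \sum_(i in ~: I) a i.
      by apply: eq_bigl => i; rewrite !inE.
    by rewrite subrr.
  exists (fun i t => U (phi i) t); split.
  + by move=> i t; rewrite U_dot subrr cos0.
  + by move=> i; exact: U01.
  + by move=> i; exact: U2.
  + move=> i t; rewrite U_dot.
    have -> : phi (ordS i) = phi i.+1.
      case: (ltnP i.+1 m.+1) => h.
        by rewrite /= modn_small.
      have e : i.+1 = m.+1 by apply/eqP; rewrite eqn_leq h ltn_ord.
      by rewrite e htot /= e modnn /phi big_geq.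
    rewrite /phi big_nat_recr //= opprD addrA subrr add0r cosN /B /A inord_val.
    by case: ifP; rewrite ?cosN.
- case=> u [h1 h2 h3 h4].
  pose X := fun k => (u (inord (k %% m.+1)) 0 0 0 : R).
  pose Y := fun k => (u (inord (k %% m.+1)) 0 0 1 : R).
  pose A := fun j : nat => a (inord j).
  have hX : forall k, X k ^+ 2 + Y k ^+ 2 = 1.
    by move=> k; rewrite /X /Y -(h1 (inord (k %% m.+1)) 0) dot2E !expr2.
  have hord : forall k, (k <= m)%N -> ordS (inord k : 'I_m.+1) = inord (k.+1 %% m.+1).
    by move=> k hk; apply/val_inj; rewrite /= !inordK // ltn_pmod.
  have hX2 : forall k, (k <= m)%N -> X k * X k.+1 + Y k * Y k.+1 = cos (A k).
    move=> k hk; rewrite /X /Y /A (modn_small (m:=k)) // -hord // -(h4 _ 0) dot2E.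
    by [].
  have hA : forall k, (k <= m)%N -> 0 < A k < 2.
    move=> k hk; apply/andP; split; first exact: hpos.
    have := le_sum hpos (inord k); rewrite hsum /A; lra.
  have [ex ey] := rot hX hX2 hA m.+1 (leqnn _).
  have hXm : X m.+1 = X 0 by rewrite /X modnn mod0n.
  have hYm : Y m.+1 = Y 0 by rewrite /Y modnn mod0n.
  rewrite hXm in ex; rewrite hYm in ey.
  set th := \sum_(0 <= j < m.+1) _ in ex ey.
  have hc : cos th = 1.
    have := hX 0 => h0.
    have e1 : X 0 * X 0 = X 0 * (cos th * X 0 - sin th * Y 0) by rewrite -ex.
    have e2 : Y 0 * Y 0 = Y 0 * (cos th * Y 0 + sin th * X 0) by rewrite -ey.
    transitivity (cos th * (X 0 ^+ 2 + Y 0 ^+ 2)); first by rewrite h0 mulr1.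
    rewrite -[RHS]h0 !expr2 [in RHS]e1 [in RHS]e2; ring.
  have th0 : th = 0.
    apply: cos_eq1 => //.
    apply: (le_lt_trans (ler_norm_sum _ _ _)).
    rewrite (eq_bigr (fun j => A j)) => [|j _]; last first.
      case: ifP => _; rewrite ?normrN gtr0_norm //; exact: hpos.
    rewrite big_mkord (eq_bigr (fun i => a i)) => [|i _]; last by rewrite /A inord_val.
    rewrite hsum; lra.
  exists [set i : 'I_m.+1 | 0 <= X i * Y i.+1 - Y i * X i.+1].
  apply/eqP; rewrite -subr_eq0; apply/eqP; rewrite -[Z in _ = Z]th0 /th big_mkord.
  rewrite [RHS](bigID (fun i : 'I_m.+1 => 0 <= X i * Y i.+1 - Y i * X i.+1)) /=.
  rewrite [Z in _ = Z + _](eq_bigr (fun i => a i)) => [|i ->]; last by rewrite /A inord_val.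
  rewrite [Z in _ = _ + Z](eq_bigr (fun i => - a i)) => [|i /negbTE ->]; last by rewrite /A inord_val.
  rewrite sumrN; apply: (congr2 (fun x y => x - y)).
    by apply: eq_bigl => i; rewrite finset.in_set.
  by apply: eq_bigl => i; rewrite finset.in_setC finset.in_set.
Qed.
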